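(* Let $c,g,d\in\mathbb{R}$, $t_0>0$, and let $\theta(x,t)$ be a solution on $\mathbb{R}\times[0,t_0]$ of $$\theta_t+c\,\theta_x+g\,\theta\theta_x+d\,\theta_{xxx}=0$$ which is smooth and such that $\partial_t^2\theta$ and $\partial_x^k\theta$ for $0\le k\le 5$ satisfy $|\cdot|\le C(1+x^2)^{-1}$ uniformly for $t\in[0,t_0]$. For a space step $h>0$ and time step $\tau>0$ put $x_i=ih$ ($i\in\mathbb{Z}$), $t_j=j\tau$, and define $\theta^j_i$ by $\theta^0_i=\theta(x_i,0)$ and the explicit scheme $$\frac{\theta^{j+1}_i-\theta^j_i}{\tau}+c\frac{\theta^j_{i+1}-\theta^j_{i-1}}{2h}+g\,\theta^j_i\frac{\theta^j_{i+1}-\theta^j_{i-1}}{2h}+e\frac{\theta^j_{i+2}-2\theta^j_{i+1}+2\theta^j_{i-1}-\theta^j_{i-2}}{2h^3}=0,\qquad e=d-\frac{c h^2}{6}.$$ Assume $\tau\le K h^6$ for a fixed constant $K$. Then there is a constant $M$, independent of $h$ and $\tau$, such that for all sufficiently small $h$ and all $j$ with $j\tau\le t_0$, $$\Big(\sum_{i\in\mathbb{Z}}\big(\theta^j_i-\theta(x_i,t_j)\big)^2h\Big)^{1/2}\le M(\tau+h^2).$$ In particular the scheme converges in the discrete $L^2$ norm to the exact solution. *)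

(* Defs.v *)
From Stdlib Require Import Reals Lra Lia ZArith List.
From Coquelicot Require Import Coquelicot.
Open Scope R_scope.

(* Iterated partial derivative of f : R -> R -> R (f x t).
   A list of booleans: true = d/dx, false = d/dt; the head is applied last. *)
Fixpoint pd (l : list bool) (f : R -> R -> R) : R -> R -> R :=
  match l with
  | nil => f
  | b :: l' =>
      if b then fun x t => Derive (fun y => pd l' f y t) x
      else fun x t => Derive (fun s => pd l' f x s) t
  end.

Definition dx (k : nat) (f : R -> R -> R) : R -> R -> R := pd (repeat true k) f.
Definition dt (k : nat) (f : R -> R -> R) : R -> R -> R := pd (repeat false k) f.

Definition smooth2 (f : R -> R -> R) : Prop :=
  forall (l : list bool) (x t : R),
    ex_derive (fun y => pd l f y t) x /\
    ex_derive (fun s => pd l f x s) t /\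
    continuous (fun p : R * R => pd l f (fst p) (snd p)) (x, t).

Fixpoint theta_disc (c g d : R) (theta : R -> R -> R) (h tau : R)
    (j : nat) (i : Z) : R :=
  match j with
  | O => theta (IZR i * h) 0
  | S j' =>
      let u := fun k : Z => theta_disc c g d theta h tau j' k in
      let e := d - c * h ^ 2 / 6 in
      u i - tau * ( c * (u (i + 1)%Z - u (i - 1)%Z) / (2 * h)
                  + g * u i * (u (i + 1)%Z - u (i - 1)%Z) / (2 * h)
                  + e * (u (i + 2)%Z - 2 * u (i + 1)%Z + 2 * u (i - 1)%Z
                         - u (i - 2)%Z) / (2 * h ^ 3) )
  end.

Definition err_partial (c g d : R) (theta : R -> R -> R) (h tau : R)
    (j : nat) (N : nat) : R :=
  sum_f_R0 (fun n =>
    let i := (Z.of_nat n - Z.of_nat N)%Z in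
    (theta_disc c g d theta h tau j i - theta (IZR i * h) (INR j * tau)) ^ 2 * h)
    (2 * N).

(* Main.v *)
Require Import Defs.
From Stdlib Require Import Reals Lra Lia ZArith List.
From Coquelicot Require Import Coquelicot.
Open Scope R_scope.

Definition smooth1 (f : R -> R) := forall k x, ex_derive_n f k x.

Lemma Dn_opp_eq (f : R -> R) : smooth1 f -> forall k y,
  Derive_n (fun z => f (- z)) k y = (-1) ^ k * Derive_n f k (- y).
Proof.
  intros Hs k. induction k as [|k IH]; intros y.
  - simpl. ring.
  - simpl Derive_n.
    rewrite (Derive_ext _ (fun y => (-1) ^ k * Derive_n f k (- y)) y IH).
    rewrite Derive_scal.
    rewrite (Derive_comp (Derive_n f k) (fun y => - y) y).
    + rewrite Derive_opp. rewrite (Derive_ext (fun y => y) id) by reflexivity.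
      rewrite Derive_id. simpl. ring.
    + exact (Hs (S k) (- y)).
    + auto_derive; exact I.
Qed.

Lemma smooth1_opp (f : R -> R) : smooth1 f -> smooth1 (fun z => f (- z)).
Proof.
  intros Hs k y. destruct k as [|k]. exact I.
  simpl. apply (ex_derive_ext (fun y => (-1) ^ k * Derive_n f k (- y))).
  { intros t. symmetry. apply Dn_opp_eq; auto. }
  apply ex_derive_scal.
  apply (ex_derive_comp (Derive_n f k) (fun y => - y)).
  - exact (Hs (S k) (- y)).
  - auto_derive; exact I.
Qed.

Definition tsum (f : R -> R) (n : nat) (a b : R) :=
  sum_f_R0 (fun m => (b - a) ^ m / INR (fact m) * Derive_n f m a) n.

Lemma taylor_fwd (f : R -> R) n a b B : smooth1 f -> a < b ->
  (forall z, a <= z <= b -> Rabs (Derive_n f (S n) z) <= B) ->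
  Rabs (f b - tsum f n a b) <= (b - a) ^ S n / INR (fact (S n)) * B.
Proof.
  intros Hs Hab HB.
  destruct (Taylor_Lagrange f n a b Hab) as [z [Hz Heq]].
  { intros; apply Hs. }
  unfold tsum. rewrite Heq.
  replace (_ + _ - _) with ((b - a) ^ S n / INR (fact (S n)) * Derive_n f (S n) z) by ring.
  assert (Hc : 0 <= (b - a) ^ S n / INR (fact (S n))).
  { apply Rmult_le_pos. apply pow_le; lra. left; apply Rinv_0_lt_compat, INR_fact_lt_0. }
  rewrite Rabs_mult, (Rabs_pos_eq _ Hc). apply Rmult_le_compat_l; auto. apply HB; lra.
Qed.

Lemma taylor_bwd (f : R -> R) n a b B : smooth1 f -> b < a ->
  (forall z, b <= z <= a -> Rabs (Derive_n f (S n) z) <= B) ->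
  Rabs (f b - tsum f n a b) <= (a - b) ^ S n / INR (fact (S n)) * B.
Proof.
  intros Hs Hab HB.
  set (g := fun z => f (- z)).
  assert (Hg := smooth1_opp f Hs).
  assert (H := taylor_fwd g n (- a) (- b) B Hg ltac:(lra)).
  replace (a - b) with (- b - - a) by ring.
  replace (f b - tsum f n a b) with (g (- b) - tsum g n (- a) (- b)).
  - apply H. intros z Hz. unfold g. rewrite Dn_opp_eq by auto.
    rewrite Rabs_mult, pow_1_abs, Rmult_1_l. apply HB; lra.
  - unfold g. rewrite Ropp_involutive. f_equal. unfold tsum. apply sum_eq.
    intros m _. unfold g. rewrite Dn_opp_eq by auto. rewrite Ropp_involutive.
    replace (- b - - a) with ((-1) * (b - a)) by ring. rewrite Rpow_mult_distr.
    assert (Hss : (-1) ^ m * (-1) ^ m = 1).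
    { rewrite <- Rpow_mult_distr. replace (-1 * -1) with 1 by ring. apply pow1. }
    transitivity ((-1) ^ m * (-1) ^ m * ((b - a) ^ m / INR (fact m) * Derive_n f m a)).
    { field. apply INR_fact_neq_0. }
    rewrite Hss. ring.
Qed.

Lemma taylor_abs (f : R -> R) n a b B : smooth1 f -> a <> b ->
  (forall z, Rabs (z - a) <= Rabs (b - a) -> Rabs (Derive_n f (S n) z) <= B) ->
  Rabs (f b - tsum f n a b) <= Rabs (b - a) ^ S n / INR (fact (S n)) * B.
Proof.
  intros Hs Hab HB. destruct (Rlt_or_le a b) as [H|H].
  - rewrite (Rabs_pos_eq (b - a)) by lra. apply taylor_fwd; auto.
    intros z Hz. apply HB. unfold Rabs; destruct Rcase_abs; destruct Rcase_abs; lra.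
  - rewrite (Rabs_left1 (b - a)) by lra. replace (- (b - a)) with (a - b) by ring.
    apply taylor_bwd; auto. lra.
    intros z Hz. apply HB. rewrite (Rabs_left1 (b - a)) by lra. unfold Rabs. destruct Rcase_abs; lra.
Qed.

Lemma tsum0 f a b : tsum f 0 a b = f a.
Proof. unfold tsum. simpl. field. Qed.
Lemma tsum2 f a b : tsum f 2 a b = f a + (b - a) * Derive_n f 1 a + (b - a) ^ 2 / 2 * Derive_n f 2 a.
Proof. unfold tsum. simpl. field. Qed.
Lemma tsum4 f a b : tsum f 4 a b = f a + (b - a) * Derive_n f 1 a + (b - a) ^ 2 / 2 * Derive_n f 2 a
  + (b - a) ^ 3 / 6 * Derive_n f 3 a + (b - a) ^ 4 / 24 * Derive_n f 4 a.
Proof. unfold tsum. simpl. field. Qed.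

Lemma mvt_abs f a b B : smooth1 f -> a <> b ->
  (forall z, Rabs (z - a) <= Rabs (b - a) -> Rabs (Derive_n f 1 z) <= B) ->
  Rabs (f b - f a) <= Rabs (b - a) * B.
Proof.
  intros Hs Hab HB. assert (H := taylor_abs f 0 a b B Hs Hab HB).
  rewrite tsum0 in H. simpl in H. replace (Rabs (b - a) * B) with (Rabs (b - a) * 1 / 1 * B) by field.
  exact H.
Qed.

Lemma stencil1 f x h B : smooth1 f -> 0 < h ->
  (forall z, Rabs (z - x) <= h -> Rabs (Derive_n f 3 z) <= B) ->
  Rabs ((f (x + h) - f (x - h)) / (2 * h) - Derive_n f 1 x) <= h ^ 2 / 6 * B.
Proof.
  intros Hs Hh HB.
  assert (H1 := taylor_abs f 2 x (x + h) B Hs ltac:(lra)).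
  assert (H2 := taylor_abs f 2 x (x - h) B Hs ltac:(lra)).
  replace (x + h - x) with h in H1 by ring. replace (x - h - x) with (- h) in H2 by ring.
  rewrite Rabs_Ropp in H2. rewrite (Rabs_pos_eq h) in H1, H2 by lra.
  specialize (H1 HB). specialize (H2 HB).
  rewrite tsum2 in H1, H2. simpl fact in H1, H2. simpl INR in H1, H2.
  replace ((f (x + h) - f (x - h)) / (2 * h) - Derive_n f 1 x) with
    (((f (x + h) - (f x + (x + h - x) * Derive_n f 1 x + (x + h - x) ^ 2 / 2 * Derive_n f 2 x))
     - (f (x - h) - (f x + (x - h - x) * Derive_n f 1 x + (x - h - x) ^ 2 / 2 * Derive_n f 2 x))) / (2 * h))
    by (field; lra).
  unfold Rdiv at 1. rewrite Rabs_mult, Rabs_inv, (Rabs_pos_eq (2 * h)) by lra.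
  apply Rle_trans with ((h ^ 3 / (1 + 1 + 1 + 1 + 1 + 1) * B + h ^ 3 / (1 + 1 + 1 + 1 + 1 + 1) * B) * / (2 * h)).
  - apply Rmult_le_compat_r. left; apply Rinv_0_lt_compat; lra.
    eapply Rle_trans. apply Rabs_triang. rewrite Rabs_Ropp. lra.
  - right. field. lra.
Qed.

Lemma stencil3 f x h B : smooth1 f -> 0 < h ->
  (forall z, Rabs (z - x) <= 2 * h -> Rabs (Derive_n f 5 z) <= B) ->
  Rabs ((f (x + 2 * h) - 2 * f (x + h) + 2 * f (x - h) - f (x - 2 * h)) / (2 * h ^ 3)
        - Derive_n f 3 x) <= h ^ 2 * B.
Proof.
  intros Hs Hh HB.
  assert (HB0 : 0 <= B). { eapply Rle_trans. apply Rabs_pos. apply HB. rewrite Rminus_eq_0, Rabs_R0; lra. }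
  assert (G : forall s, 0 < Rabs s <= 2 * h -> Rabs (f (x + s) - tsum f 4 x (x + s)) <= Rabs s ^ 5 / 120 * B).
  { intros s Hsb. assert (H := taylor_abs f 4 x (x + s) B Hs).
    replace (x + s - x) with s in H by ring.
    replace (Rabs s ^ 5 / 120 * B) with (Rabs s ^ 5 / INR (fact 5) * B) by (simpl; field).
    apply H. intros E. assert (s = 0) by lra. subst s. rewrite Rabs_R0 in Hsb. lra.
    intros z Hz. apply HB. lra. }
  assert (H1 := G h). assert (H2 := G (2 * h)). assert (H3 := G (- h)). assert (H4 := G (- (2 * h))).
  rewrite Rabs_Ropp in H3, H4.
  rewrite (Rabs_pos_eq h) in H1, H3 by lra. rewrite (Rabs_pos_eq (2 * h)) in H2, H4 by lra.
  specialize (H1 ltac:(lra)). specialize (H2 ltac:(lra)). specialize (H3 ltac:(lra)). specialize (H4 ltac:(lra)).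
  rewrite tsum4 in H1, H2, H3, H4.
  replace (x + - h) with (x - h) in H3 by ring. replace (x + - (2 * h)) with (x - 2 * h) in H4 by ring.
  set (r1 := f (x + h) - _) in H1. set (r2 := f (x + 2 * h) - _) in H2.
  set (r3 := f (x - h) - _) in H3. set (r4 := f (x - 2 * h) - _) in H4.
  replace ((f (x + 2 * h) - 2 * f (x + h) + 2 * f (x - h) - f (x - 2 * h)) / (2 * h ^ 3) - Derive_n f 3 x)
    with ((r2 - 2 * r1 + 2 * r3 - r4) / (2 * h ^ 3)) by (unfold r1, r2, r3, r4; field; lra).
  unfold Rdiv at 1. rewrite Rabs_mult, Rabs_inv, (Rabs_pos_eq (2 * h ^ 3)) by (apply Rmult_le_pos; [lra | apply pow_le; lra]).
  assert (Hn : Rabs (r2 - 2 * r1 + 2 * r3 - r4) <= Rabs r2 + 2 * Rabs r1 + 2 * Rabs r3 + Rabs r4).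
  { unfold Rabs. repeat destruct Rcase_abs; lra. }
  apply Rle_trans with ((68 * h ^ 5 / 120 * B) * / (2 * h ^ 3)).
  - apply Rmult_le_compat_r. left; apply Rinv_0_lt_compat. apply Rmult_lt_0_compat; [lra | apply pow_lt; lra].
    replace ((2 * h) ^ 5) with (32 * h ^ 5) in H2, H4 by ring. lra.
  - replace (68 * h ^ 5 / 120 * B * / (2 * h ^ 3)) with (68 / 240 * (h ^ 2 * B)) by (field; lra).
    assert (0 <= h ^ 2 * B) by (apply Rmult_le_pos; [apply pow_le; lra | lra]). lra.
Qed.

Lemma tsum1 f a b : tsum f 1 a b = f a + (b - a) * Derive_n f 1 a.
Proof. unfold tsum. simpl. field. Qed.

Lemma step_t f t tau B : smooth1 f -> 0 < tau ->
  (forall z, t <= z <= t + tau -> Rabs (Derive_n f 2 z) <= B) ->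
  Rabs ((f (t + tau) - f t) / tau - Derive_n f 1 t) <= tau / 2 * B.
Proof.
  intros Hs Ht HB. assert (H := taylor_fwd f 1 t (t + tau) B Hs ltac:(lra)).
  replace (t + tau - t) with tau in H by ring. specialize (H HB).
  rewrite tsum1 in H. replace (t + tau - t) with tau in H by ring.
  replace ((f (t + tau) - f t) / tau - Derive_n f 1 t) with
    ((f (t + tau) - (f t + tau * Derive_n f 1 t)) * / tau) by (field; lra).
  rewrite Rabs_mult, Rabs_inv, (Rabs_pos_eq tau) by lra.
  apply Rle_trans with (tau ^ 2 / 2 * B * / tau).
  - apply Rmult_le_compat_r. left; apply Rinv_0_lt_compat; lra. simpl in H. simpl. lra.
  - right. field. lra.
Qed.

Fixpoint W (f : Z -> R) (N : nat) : R :=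
  match N with
  | O => f 0%Z
  | S N' => W f N' + f (Z.of_nat (S N')) + f (- Z.of_nat (S N'))%Z
  end.

Lemma W_S f N : W f (S N) = W f N + f (Z.of_nat (S N)) + f (- Z.of_nat (S N))%Z.
Proof. reflexivity. Qed.
Lemma W_0 f : W f 0 = f 0%Z.
Proof. reflexivity. Qed.

Lemma W_ext f g N : (forall i, f i = g i) -> W f N = W g N.
Proof. intros H; induction N; rewrite ?W_0, ?W_S; [apply H| rewrite IHN, !H; auto]. Qed.

Lemma W_plus f g N : W (fun i => f i + g i) N = W f N + W g N.
Proof. induction N; rewrite ?W_0, ?W_S; [ring| rewrite IHN; ring]. Qed.

Lemma W_scal a f N : W (fun i => a * f i) N = a * W f N.
Proof. induction N; rewrite ?W_0, ?W_S; [ring| rewrite IHN; ring]. Qed.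

Lemma W_le f g N : (forall i, f i <= g i) -> W f N <= W g N.
Proof. intros H; induction N; rewrite ?W_0, ?W_S; [apply H|]. pose proof (H (Z.of_nat (S N))); pose proof (H (- Z.of_nat (S N))%Z); lra. Qed.

Lemma W_incr f N : (forall i, 0 <= f i) -> W f N <= W f (S N).
Proof. intros H. rewrite W_S. pose proof (H (Z.of_nat (S N))); pose proof (H (- Z.of_nat (S N))%Z); lra. Qed.

Lemma W_incr_n f N k : (forall i, 0 <= f i) -> W f N <= W f (k + N).
Proof. intros H. induction k. simpl; lra. change (S k + N)%nat with (S (k + N)). eapply Rle_trans; [apply IHk| apply W_incr; auto]. Qed.

Lemma W_pt f i : (forall i, 0 <= f i) -> f i <= W f (Z.abs_nat i).
Proof.
  intros H. assert (H0 : forall N, f 0%Z <= W f N).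
  { induction N; rewrite ?W_0, ?W_S; [lra|]. pose proof (H (Z.of_nat (S N))); pose proof (H (- Z.of_nat (S N))%Z); lra. }
  destruct i as [|p|p]; simpl Z.abs_nat.
  - simpl; lra.
  - destruct (Pos2Nat.is_succ p) as [n Hn]. rewrite Hn, W_S.
    replace (Z.pos p) with (Z.of_nat (S n)) by lia.
    pose proof (H0 n). pose proof (H (- Z.of_nat (S n))%Z). pose proof (H 0%Z). lra.
  - destruct (Pos2Nat.is_succ p) as [n Hn]. rewrite Hn, W_S.
    replace (Z.neg p) with (- Z.of_nat (S n))%Z by lia.
    pose proof (H0 n). pose proof (H (Z.of_nat (S n))). pose proof (H 0%Z). lra.
Qed.

Lemma W_shift f N : W (fun i => f (i + 1)%Z) N = W f N + f (Z.of_nat (S N)) - f (- Z.of_nat N)%Z.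
Proof.
  induction N.
  - simpl. ring.
  - rewrite W_S, IHN, W_S.
    replace (Z.of_nat (S N) + 1)%Z with (Z.of_nat (S (S N))) by lia.
    replace (- Z.of_nat (S N) + 1)%Z with (- Z.of_nat N)%Z by lia.
    ring.
Qed.

Definition summable (f : Z -> R) := exists B, forall N, W (fun i => Rabs (f i)) N <= B.
Definition Sum (f : Z -> R) := real (Lim_seq (W f)).

Lemma Sum_spec f : summable f -> is_lim_seq (W f) (Sum f).
Proof.
  intros [B HB].
  assert (E1 : ex_finite_lim_seq (W (fun i => Rabs (f i)))).
  { apply (ex_finite_lim_seq_incr _ B); auto. intros n; apply W_incr; intros; apply Rabs_pos. }
  assert (E2 : ex_finite_lim_seq (W (fun i => Rabs (f i) + f i))).
  { apply (ex_finite_lim_seq_incr _ (2 * B)).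
    - intros n; apply W_incr; intros i; pose proof (Rle_abs (- f i)); rewrite Rabs_Ropp in *; lra.
    - intros n. rewrite W_plus. pose proof (HB n).
      assert (W f n <= W (fun i => Rabs (f i)) n) by (apply W_le; intros; apply Rle_abs). lra. }
  destruct E1 as [l1 H1]. destruct E2 as [l2 H2].
  assert (H : is_lim_seq (W f) (l2 - l1)).
  { apply (is_lim_seq_ext (fun n => W (fun i => Rabs (f i) + f i) n - W (fun i => Rabs (f i)) n)).
    - intros n. rewrite W_plus. ring.
    - eapply is_lim_seq_minus; eauto. reflexivity. }
  unfold Sum. rewrite (is_lim_seq_unique _ _ H). exact H.
Qed.

Lemma Sum_le f g : summable f -> summable g -> (forall i, f i <= g i) -> Sum f <= Sum g.
Proof.
  intros Hf Hg H. assert (X := is_lim_seq_le _ _ _ _ (fun n => W_le f g n H) (Sum_spec f Hf) (Sum_spec g Hg)).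
  exact X.
Qed.

Lemma Sum_ub f B : summable f -> (forall N, W f N <= B) -> Sum f <= B.
Proof.
  intros Hf H. assert (X := is_lim_seq_le _ _ _ _ H (Sum_spec f Hf) (is_lim_seq_const B)). exact X.
Qed.

Lemma Sum_lb f N : summable f -> (forall i, 0 <= f i) -> W f N <= Sum f.
Proof.
  intros Hf H. assert (H2 : is_lim_seq (fun n => W f (n + N)) (Sum f)).
  { apply (is_lim_seq_incr_n (W f) N). apply Sum_spec; auto. }
  assert (X := is_lim_seq_le _ _ _ _ (fun n => W_incr_n f N n H) (is_lim_seq_const (W f N)) H2). exact X.
Qed.

Lemma Sum_pt f i : summable f -> (forall i, 0 <= f i) -> f i <= Sum f.
Proof. intros Hf H. eapply Rle_trans. apply W_pt; auto. apply Sum_lb; auto. Qed.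

Lemma Sum_plus f g : summable f -> summable g -> Sum (fun i => f i + g i) = Sum f + Sum g.
Proof.
  intros Hf Hg. assert (H : is_lim_seq (W (fun i => f i + g i)) (Sum f + Sum g)).
  { apply (is_lim_seq_ext (fun n => W f n + W g n)). intros; rewrite W_plus; auto.
    eapply is_lim_seq_plus. apply Sum_spec; auto. apply Sum_spec; auto. reflexivity. }
  unfold Sum at 1. rewrite (is_lim_seq_unique _ _ H). reflexivity.
Qed.

Lemma Sum_scal a f : summable f -> Sum (fun i => a * f i) = a * Sum f.
Proof.
  intros Hf. assert (H : is_lim_seq (W (fun i => a * f i)) (a * Sum f)).
  { apply (is_lim_seq_ext (fun n => a * W f n)). intros; rewrite W_scal; auto.
    pose proof (is_lim_seq_scal_l _ a _ (Sum_spec f Hf)) as X. exact X. }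
  unfold Sum at 1. rewrite (is_lim_seq_unique _ _ H). reflexivity.
Qed.

Lemma Sum_ext f g : (forall i, f i = g i) -> Sum f = Sum g.
Proof. intros H. unfold Sum. f_equal. apply Lim_seq_ext. intros; apply W_ext; auto. Qed.

Lemma summable_cmp f g : summable g -> (forall i, Rabs (f i) <= Rabs (g i)) -> summable f.
Proof. intros [B HB] H. exists B. intros N. eapply Rle_trans; [|apply HB]. apply W_le; auto. Qed.

Lemma summable_plus f g : summable f -> summable g -> summable (fun i => f i + g i).
Proof.
  intros [B1 H1] [B2 H2]. exists (B1 + B2). intros N.
  eapply Rle_trans. apply (W_le _ (fun i => Rabs (f i) + Rabs (g i))). intros; apply Rabs_triang.
  rewrite W_plus. pose proof (H1 N); pose proof (H2 N); lra.
Qed.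

Lemma summable_scal a f : summable f -> summable (fun i => a * f i).
Proof.
  intros [B H]. exists (Rabs a * B). intros N.
  rewrite (W_ext _ (fun i => Rabs a * Rabs (f i))) by (intros; apply Rabs_mult).
  rewrite W_scal. apply Rmult_le_compat_l; auto. apply Rabs_pos.
Qed.

Lemma summable_shift f : summable f -> summable (fun i => f (i + 1)%Z).
Proof.
  intros [B H]. exists B. intros N. rewrite (W_shift (fun i => Rabs (f i))).
  eapply Rle_trans; [|apply (H (S N))]. rewrite (W_S _ N).
  pose proof (Rabs_pos (f (- Z.of_nat N)%Z)); pose proof (Rabs_pos (f (- Z.of_nat (S N))%Z)). lra.
Qed.

Lemma W_nonneg f N : (forall i, 0 <= f i) -> 0 <= W f N.
Proof. intros H. induction N; rewrite ?W_0, ?W_S; [apply H|]. pose proof (H (Z.of_nat (S N))); pose proof (H (- Z.of_nat (S N))%Z); lra. Qed.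

Lemma summable_shiftm f : summable f -> summable (fun i => f (i - 1)%Z).
Proof.
  intros [B H]. exists (B + B). intros N.
  assert (E := W_shift (fun i => Rabs (f (i - 1)%Z)) N).
  rewrite (W_ext (fun i => Rabs (f (i + 1 - 1)%Z)) (fun i => Rabs (f i))) in E
    by (intros; do 3 f_equal; lia).
  assert (Hp : 0 <= Rabs (f (Z.of_nat (S N) - 1)%Z)) by apply Rabs_pos.
  pose proof (H N).
  assert (Rabs (f (- Z.of_nat N - 1)%Z) <= B).
  { eapply Rle_trans; [| apply (H (S N))]. rewrite W_S.
    replace (- Z.of_nat N - 1)%Z with (- Z.of_nat (S N))%Z by lia.
    pose proof (W_nonneg (fun i => Rabs (f i)) N (fun i => Rabs_pos _)).
    pose proof (Rabs_pos (f (Z.of_nat (S N)))). lra. }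
  lra.
Qed.

Lemma summable_tail f : summable f ->
  is_lim_seq (fun n => f (Z.of_nat n)) 0 /\ is_lim_seq (fun n => f (- Z.of_nat n)%Z) 0.
Proof.
  intros Hf. assert (Ha : summable (fun i => Rabs (f i))).
  { apply (summable_cmp _ f Hf). intros; rewrite Rabs_Rabsolu; lra. }
  assert (L := Sum_spec _ Ha).
  assert (D : is_lim_seq (fun n => W (fun i => Rabs (f i)) (S n) - W (fun i => Rabs (f i)) n) 0).
  { replace (Finite 0) with (Rbar_minus (Sum (fun i => Rabs (f i))) (Sum (fun i => Rabs (f i)))).
    apply is_lim_seq_minus'. apply (is_lim_seq_incr_1 (W _)). exact L. exact L.
    simpl. f_equal. ring. }
  split.
  - apply is_lim_seq_incr_1. apply is_lim_seq_abs_0.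
    apply (is_lim_seq_le_le (fun _ => 0) _ _ 0) with (3 := D) ; [| apply is_lim_seq_const].
    intros n. split. apply Rabs_pos. rewrite W_S.
    pose proof (Rabs_pos (f (- Z.of_nat (S n))%Z)). lra.
  - apply is_lim_seq_incr_1. apply is_lim_seq_abs_0.
    apply (is_lim_seq_le_le (fun _ => 0) _ _ 0) with (3 := D) ; [| apply is_lim_seq_const].
    intros n. split. apply Rabs_pos. rewrite W_S.
    pose proof (Rabs_pos (f (Z.of_nat (S n)))). lra.
Qed.

Lemma Sum_shift f : summable f -> Sum (fun i => f (i + 1)%Z) = Sum f.
Proof.
  intros Hf. destruct (summable_tail f Hf) as [T1 T2].
  assert (H : is_lim_seq (W (fun i => f (i + 1)%Z)) (Sum f)).
  { apply (is_lim_seq_ext (fun n => W f n + f (Z.of_nat (S n)) - f (- Z.of_nat n)%Z)).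
    intros; rewrite W_shift; auto.
    replace (Finite (Sum f)) with (Rbar_minus (Rbar_plus (Sum f) 0) 0) by (simpl; f_equal; ring).
    apply is_lim_seq_minus'; auto. apply is_lim_seq_plus'. apply Sum_spec; auto.
    apply (is_lim_seq_incr_1 (fun n => f (Z.of_nat n))). auto. }
  unfold Sum at 1. rewrite (is_lim_seq_unique _ _ H). reflexivity.
Qed.

Lemma Sum_shiftm f : summable f -> Sum (fun i => f (i - 1)%Z) = Sum f.
Proof.
  intros Hf. rewrite <- (Sum_shift (fun i => f (i - 1)%Z)) by (apply summable_shiftm; auto).
  apply Sum_ext. intros; f_equal; lia.
Qed.

Lemma sq5 a b c d e : (a + b + c + d + e) ^ 2 <= 5 * (a ^ 2 + b ^ 2 + c ^ 2 + d ^ 2 + e ^ 2).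
Proof.
  assert (0 <= (a-b)^2 + (a-c)^2 + (a-d)^2 + (a-e)^2 + (b-c)^2 + (b-d)^2 + (b-e)^2 + (c-d)^2 + (c-e)^2 + (d-e)^2)
    by (repeat apply Rplus_le_le_0_compat; apply pow2_ge_0).
  nra.
Qed.

Lemma cs4 a b c d : (a + b + c + d) ^ 2 <= 4 * (a ^ 2 + b ^ 2 + c ^ 2 + d ^ 2).
Proof.
  assert (0 <= (a-b)^2 + (a-c)^2 + (a-d)^2 + (b-c)^2 + (b-d)^2 + (c-d)^2)
    by (repeat apply Rplus_le_le_0_compat; apply pow2_ge_0).
  nra.
Qed.

Lemma D1sq p q h : 0 < h -> ((p - q) / (2 * h)) ^ 2 <= (p ^ 2 + q ^ 2) / (2 * h ^ 2).
Proof.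
  intros Hh. replace ((p ^ 2 + q ^ 2) / (2 * h ^ 2)) with (((p - q) / (2 * h)) ^ 2 + ((p + q) / (2 * h)) ^ 2)
    by (field; lra).
  pose proof (pow2_ge_0 ((p + q) / (2 * h))). lra.
Qed.

Lemma D3sq a b c d h : 0 < h ->
  ((a - 2 * b + 2 * c - d) / (2 * h ^ 3)) ^ 2 <= 4 * (a ^ 2 + 4 * b ^ 2 + 4 * c ^ 2 + d ^ 2) / (4 * h ^ 6).
Proof.
  intros Hh. assert (Hh3 : 0 < h ^ 3) by (apply pow_lt; lra).
  replace (((a - 2 * b + 2 * c - d) / (2 * h ^ 3)) ^ 2) with ((a + (- 2 * b) + 2 * c + (- d)) ^ 2 / (4 * h ^ 6))
    by (field; lra).
  unfold Rdiv. apply Rmult_le_compat_r. left; apply Rinv_0_lt_compat. assert (0 < h ^ 6) by (apply pow_lt; lra). lra.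
  eapply Rle_trans. apply cs4. right. ring.
Qed.

Lemma pos2 a b : 0 <= a -> 0 <= b -> 0 <= a * b.
Proof. intros; apply Rmult_le_pos; auto. Qed.

Lemma X1_le1 p q h : 0 < h -> Rabs p <= h -> Rabs q <= h -> Rabs ((p - q) / (2 * h)) <= 1.
Proof.
  intros Hh Hp Hq. unfold Rdiv. rewrite Rabs_mult, Rabs_inv, (Rabs_pos_eq (2 * h)) by lra.
  apply Rmult_le_reg_r with (2 * h). lra. rewrite Rmult_assoc, Rinv_l, Rmult_1_r by lra.
  unfold Rminus. eapply Rle_trans. apply Rabs_triang. rewrite Rabs_Ropp. lra.
Qed.

Lemma sq_le_of_abs x B : Rabs x <= B -> x ^ 2 <= B ^ 2.
Proof. intros H. rewrite <- pow2_abs. apply pow_incr. split; auto. apply Rabs_pos. Qed.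

Lemma Lsq_gen c eps g e0 C h E v p q a dd Y1 :
  0 < h -> h <= 1 -> Rabs eps <= e0 -> Rabs v <= C -> Rabs Y1 <= C ->
  Rabs E <= h -> Rabs p <= h -> Rabs q <= h ->
  (c * ((p - q) / (2 * h)) + eps * ((a - 2 * p + 2 * q - dd) / (2 * h ^ 3))
    + g * (E * ((p - q) / (2 * h)) + v * ((p - q) / (2 * h)) + E * Y1)) ^ 2
  <= 5 * (c ^ 2 + 6 * e0 ^ 2 + g ^ 2 + 2 * g ^ 2 * C ^ 2) / h ^ 6 * (a ^ 2 + p ^ 2 + E ^ 2 + q ^ 2 + dd ^ 2).
Proof.
  intros Hh Hh1 Heps Hv HY HE Hp Hq.
  set (X1 := (p - q) / (2 * h)). set (X3 := (a - 2 * p + 2 * q - dd) / (2 * h ^ 3)).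
  set (S := a ^ 2 + p ^ 2 + E ^ 2 + q ^ 2 + dd ^ 2).
  set (H := / h ^ 6).
  assert (Hh6 : 0 < h ^ 6) by (apply pow_lt; lra).
  assert (Hh6' : h ^ 6 <= 1) by (rewrite <- (pow1 6); apply pow_incr; lra).
  assert (HH : 1 <= H) by (unfold H; rewrite <- Rinv_1; apply Rinv_le_contravar; lra).
  assert (HS : 0 <= S) by (unfold S; pose proof (pow2_ge_0 a); pose proof (pow2_ge_0 p); pose proof (pow2_ge_0 E);
     pose proof (pow2_ge_0 q); pose proof (pow2_ge_0 dd); lra).
  assert (Hpq : p ^ 2 + q ^ 2 <= S) by (unfold S; pose proof (pow2_ge_0 a); pose proof (pow2_ge_0 E); pose proof (pow2_ge_0 dd); lra).
  assert (HES : E ^ 2 <= S) by (unfold S; pose proof (pow2_ge_0 a); pose proof (pow2_ge_0 p);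
     pose proof (pow2_ge_0 q); pose proof (pow2_ge_0 dd); lra).
  assert (HX1 : X1 ^ 2 <= S * H).
  { eapply Rle_trans. apply D1sq; auto. unfold Rdiv.
    assert (Hi : / (2 * h ^ 2) <= H).
    { unfold H. apply Rinv_le_contravar. auto. assert (h ^ 6 <= h ^ 2).
      { replace (h ^ 6) with (h ^ 2 * h ^ 4) by ring. assert (h ^ 4 <= 1) by (rewrite <- (pow1 4); apply pow_incr; lra).
        assert (0 <= h ^ 2) by apply pow2_ge_0. nra. }
      assert (0 <= h ^ 2) by apply pow2_ge_0. lra. }
    apply Rmult_le_compat; auto. pose proof (pow2_ge_0 p); pose proof (pow2_ge_0 q); lra.
    left; apply Rinv_0_lt_compat; assert (0 < h ^ 2) by (apply pow_lt; lra); lra. }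
  assert (HX1' : X1 ^ 2 <= 1) by (rewrite <- (pow1 2); apply sq_le_of_abs; apply X1_le1; auto).
  assert (HX3 : X3 ^ 2 <= 6 * (S * H)).
  { eapply Rle_trans. apply D3sq; auto. unfold Rdiv, H.
    replace (/ (4 * h ^ 6)) with (/ 4 * / h ^ 6) by (field; lra).
    assert (a ^ 2 + 4 * p ^ 2 + 4 * q ^ 2 + dd ^ 2 <= 4 * S).
    { unfold S. pose proof (pow2_ge_0 a); pose proof (pow2_ge_0 E); pose proof (pow2_ge_0 dd); lra. }
    assert (0 < / h ^ 6) by (apply Rinv_0_lt_compat; auto). nra. }
  assert (Hc2 := pow2_ge_0 c). assert (Hg2 := pow2_ge_0 g).
  assert (He2 : eps ^ 2 <= e0 ^ 2) by (apply sq_le_of_abs; auto).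
  assert (Hv2 : v ^ 2 <= C ^ 2) by (apply sq_le_of_abs; auto).
  assert (HY2 : Y1 ^ 2 <= C ^ 2) by (apply sq_le_of_abs; auto).
  assert (HC2 := pow2_ge_0 C).
  replace (c * X1 + eps * X3 + g * (E * X1 + v * X1 + E * Y1)) with
    (c * X1 + eps * X3 + g * E * X1 + g * v * X1 + g * E * Y1) by ring.
  eapply Rle_trans. apply sq5.
  assert (T1 : (c * X1) ^ 2 <= c ^ 2 * (S * H)) by (rewrite Rpow_mult_distr; apply Rmult_le_compat_l; auto).
  assert (T2 : (eps * X3) ^ 2 <= e0 ^ 2 * (6 * (S * H))).
  { rewrite Rpow_mult_distr. apply Rmult_le_compat; auto; apply pow2_ge_0. }
  assert (HSH : S <= S * H) by nra.
  assert (T3 : (g * E * X1) ^ 2 <= g ^ 2 * (S * H)).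
  { rewrite !Rpow_mult_distr. rewrite Rmult_assoc. apply Rmult_le_compat_l; auto.
    assert (E ^ 2 * X1 ^ 2 <= E ^ 2) by (pose proof (pow2_ge_0 E); pose proof (pow2_ge_0 X1); nra). lra. }
  assert (T4 : (g * v * X1) ^ 2 <= g ^ 2 * C ^ 2 * (S * H)).
  { rewrite !Rpow_mult_distr. rewrite !Rmult_assoc. apply Rmult_le_compat_l; auto.
    apply Rmult_le_compat; auto; apply pow2_ge_0. }
  assert (T5 : (g * E * Y1) ^ 2 <= g ^ 2 * C ^ 2 * (S * H)).
  { rewrite !Rpow_mult_distr. rewrite !Rmult_assoc. apply Rmult_le_compat_l; auto.
    rewrite Rmult_comm. apply Rmult_le_compat; auto; try apply pow2_ge_0. lra. }
  replace (5 * (c ^ 2 + 6 * e0 ^ 2 + g ^ 2 + 2 * g ^ 2 * C ^ 2) / h ^ 6 * S)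
    with (5 * (c ^ 2 * (S * H) + e0 ^ 2 * (6 * (S * H)) + g ^ 2 * (S * H) + g ^ 2 * C ^ 2 * (S * H) + g ^ 2 * C ^ 2 * (S * H)))
    by (unfold H; field; lra).
  lra.
Qed.

Lemma Rest_gen g C h vm v0 q E X1 Y1 :
  0 < h -> Rabs (vm - v0) <= h * C -> Rabs X1 <= 1 -> Rabs Y1 <= C ->
  Rabs (g * (vm - v0) * q * E / (2 * h) + g * E ^ 2 * X1 + g * E ^ 2 * Y1)
  <= Rabs g * (1 + 2 * C) * (q ^ 2 + E ^ 2).
Proof.
  intros Hh Hv HX HY.
  assert (HC : 0 <= C) by (pose proof (Rabs_pos Y1); lra).
  assert (Hg := Rabs_pos g). assert (HE := pow2_ge_0 E). assert (Hq := pow2_ge_0 q).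
  assert (Hqe : Rabs (q * E) <= (q ^ 2 + E ^ 2) / 2).
  { rewrite Rabs_mult. rewrite <- (pow2_abs q), <- (pow2_abs E).
    pose proof (pow2_ge_0 (Rabs q - Rabs E)). lra. }
  assert (R1 : Rabs (g * (vm - v0) * q * E / (2 * h)) <= Rabs g * C * ((q ^ 2 + E ^ 2) / 2) / 2).
  { assert (Hd : Rabs ((vm - v0) / h) <= C).
    { unfold Rdiv. rewrite Rabs_mult, Rabs_inv, (Rabs_pos_eq h) by lra.
      apply Rmult_le_reg_r with h. lra. rewrite Rmult_assoc, Rinv_l, Rmult_1_r by lra. lra. }
    replace (g * (vm - v0) * q * E / (2 * h)) with (g * ((vm - v0) / h) * (q * E) * / 2) by (field; lra).
    set (dd := (vm - v0) / h) in *. set (qe := q * E) in *.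
    rewrite !Rabs_mult. rewrite (Rabs_pos_eq (/ 2)) by lra. unfold Rdiv.
    apply Rmult_le_compat_r. lra. apply Rmult_le_compat; auto. apply pos2; apply Rabs_pos. apply Rabs_pos.
    apply Rmult_le_compat_l; auto. }
  assert (R2 : Rabs (g * E ^ 2 * X1) <= Rabs g * E ^ 2).
  { rewrite !Rabs_mult, (Rabs_pos_eq (E ^ 2)) by auto. rewrite <- (Rmult_1_r (Rabs g * E ^ 2)) at 2.
    apply Rmult_le_compat_l; auto. apply pos2; auto. }
  assert (R3 : Rabs (g * E ^ 2 * Y1) <= Rabs g * E ^ 2 * C).
  { rewrite !Rabs_mult, (Rabs_pos_eq (E ^ 2)) by auto. apply Rmult_le_compat_l; auto. apply pos2; auto. }
  eapply Rle_trans. apply Rabs_triang. eapply Rle_trans. apply Rplus_le_compat_r. apply Rabs_triang.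
  assert (0 <= Rabs g * C * q ^ 2) by (apply Rmult_le_pos; [apply pos2|]; auto).
  assert (0 <= Rabs g * C * E ^ 2) by (apply Rmult_le_pos; [apply pos2|]; auto).
  assert (0 <= Rabs g * q ^ 2) by (apply pos2; auto).
  nra.
Qed.

Lemma pt_gen tau e L r Qd Rs Rb' Lb : 0 < tau -> tau <= 1 -> e * L = Qd + Rs -> Rabs Rs <= Rb' -> L ^ 2 <= Lb ->
  (e - tau * L - tau * r) ^ 2 <= (1 + tau) * e ^ 2 - 2 * tau * (1 + tau) * Qd + 2 * tau * (1 + tau) * Rb'
     + (1 + tau) * tau ^ 2 * Lb + 2 * tau * r ^ 2.
Proof.
  intros Ht Ht1 HeL HR HL. set (a := e - tau * L).
  assert (S1 : (a - tau * r) ^ 2 <= (1 + tau) * a ^ 2 + 2 * tau * r ^ 2).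
  { pose proof (pow2_ge_0 (a + r)). assert (0 <= tau * (a + r) ^ 2) by (apply Rmult_le_pos; lra).
    assert (0 <= (tau - tau ^ 2) * r ^ 2) by (apply Rmult_le_pos; [nra | apply pow2_ge_0]). nra. }
  assert (S2 : a ^ 2 <= e ^ 2 - 2 * tau * Qd + 2 * tau * Rb' + tau ^ 2 * Lb).
  { unfold a. replace ((e - tau * L) ^ 2) with (e ^ 2 - 2 * tau * (e * L) + tau ^ 2 * L ^ 2) by ring.
    rewrite HeL. assert (- Rs <= Rb') by (pose proof (Rle_abs (- Rs)); rewrite Rabs_Ropp in *; lra).
    assert (tau ^ 2 * L ^ 2 <= tau ^ 2 * Lb) by (apply Rmult_le_compat_l; [apply pow2_ge_0|auto]). nra. }
  replace (e - tau * L - tau * r) with (a - tau * r) by (unfold a; ring).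
  eapply Rle_trans. apply S1.
  assert ((1 + tau) * a ^ 2 <= (1 + tau) * (e ^ 2 - 2 * tau * Qd + 2 * tau * Rb' + tau ^ 2 * Lb))
    by (apply Rmult_le_compat_l; lra).
  nra.
Qed.

Lemma summable_ext f g : (forall i, f i = g i) -> summable f -> summable g.
Proof. intros H Hf. apply (summable_cmp g f Hf). intros i; rewrite H; lra. Qed.

Lemma summable_shift2 f : summable f -> summable (fun i => f (i + 2)%Z).
Proof.
  intros Hf. apply (summable_ext (fun i => f (i + 1 + 1)%Z)). intros; f_equal; lia.
  apply (summable_shift (fun k => f (k + 1)%Z)). apply summable_shift; auto.
Qed.

Lemma summable_shiftm2 f : summable f -> summable (fun i => f (i - 2)%Z).
Proof.
  intros Hf. apply (summable_ext (fun i => f (i - 1 - 1)%Z)). intros; f_equal; lia.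
  apply (summable_shiftm (fun k => f (k - 1)%Z)). apply summable_shiftm; auto.
Qed.

Lemma Sum_shift2 f : summable f -> Sum (fun i => f (i + 2)%Z) = Sum f.
Proof.
  intros Hf. rewrite (Sum_ext _ (fun i => f (i + 1 + 1)%Z)) by (intros; f_equal; lia).
  rewrite (Sum_shift (fun k => f (k + 1)%Z)) by (apply summable_shift; auto).
  apply Sum_shift; auto.
Qed.

Lemma Sum_shiftm2 f : summable f -> Sum (fun i => f (i - 2)%Z) = Sum f.
Proof.
  intros Hf. rewrite (Sum_ext _ (fun i => f (i - 1 - 1)%Z)) by (intros; f_equal; lia).
  rewrite (Sum_shiftm (fun k => f (k - 1)%Z)) by (apply summable_shiftm; auto).
  apply Sum_shiftm; auto.
Qed.

Definition l2 (f : Z -> R) := summable (fun i => f i ^ 2).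

Lemma summable_prod a b : l2 a -> l2 b -> summable (fun i => a i * b i).
Proof.
  intros Ha Hb. apply (summable_cmp _ (fun i => a i ^ 2 + b i ^ 2)).
  apply summable_plus; auto. intros i.
  rewrite (Rabs_pos_eq (a i ^ 2 + b i ^ 2)) by (pose proof (pow2_ge_0 (a i)); pose proof (pow2_ge_0 (b i)); lra).
  rewrite Rabs_mult. rewrite <- (pow2_abs (a i)), <- (pow2_abs (b i)).
  pose proof (pow2_ge_0 (Rabs (a i) - Rabs (b i))). pose proof (pow2_ge_0 (Rabs (a i) + Rabs (b i))).
  pose proof (Rabs_pos (a i)). pose proof (Rabs_pos (b i)). nra.
Qed.

Lemma summable_bmul b f M : (forall i, Rabs (b i) <= M) -> summable f -> summable (fun i => b i * f i).
Proof.
  intros Hb Hf. apply (summable_cmp _ (fun i => M * f i)). apply summable_scal; auto.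
  intros i. rewrite !Rabs_mult. apply Rmult_le_compat_r. apply Rabs_pos.
  eapply Rle_trans. apply Hb. apply Rle_abs.
Qed.

Lemma summable_shift_l2 f : l2 f -> l2 (fun i => f (i + 1)%Z).
Proof. intros H. exact (summable_shift (fun i => f i ^ 2) H). Qed.
Lemma summable_shiftm_l2 f : l2 f -> l2 (fun i => f (i - 1)%Z).
Proof. intros H. exact (summable_shiftm (fun i => f i ^ 2) H). Qed.
Lemma summable_shift2_l2 f : l2 f -> l2 (fun i => f (i + 2)%Z).
Proof. intros H. exact (summable_shift2 (fun i => f i ^ 2) H). Qed.
Lemma summable_shiftm2_l2 f : l2 f -> l2 (fun i => f (i - 2)%Z).
Proof. intros H. exact (summable_shiftm2 (fun i => f i ^ 2) H). Qed.

Lemma summable_lin5 k1 k2 k3 k4 k5 f1 f2 f3 f4 f5 :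
  summable f1 -> summable f2 -> summable f3 -> summable f4 -> summable f5 ->
  summable (fun i => k1 * f1 i + k2 * f2 i + k3 * f3 i + k4 * f4 i + k5 * f5 i).
Proof.
  intros H1 H2 H3 H4 H5.
  repeat apply summable_plus; apply summable_scal; auto.
Qed.

Lemma Sum_lin5 k1 k2 k3 k4 k5 f1 f2 f3 f4 f5 :
  summable f1 -> summable f2 -> summable f3 -> summable f4 -> summable f5 ->
  Sum (fun i => k1 * f1 i + k2 * f2 i + k3 * f3 i + k4 * f4 i + k5 * f5 i)
  = k1 * Sum f1 + k2 * Sum f2 + k3 * Sum f3 + k4 * Sum f4 + k5 * Sum f5.
Proof.
  intros H1 H2 H3 H4 H5.
  assert (S1 := summable_scal k1 f1 H1). assert (S2 := summable_scal k2 f2 H2).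
  assert (S3 := summable_scal k3 f3 H3). assert (S4 := summable_scal k4 f4 H4).
  assert (S5 := summable_scal k5 f5 H5).
  rewrite (Sum_plus (fun i => k1 * f1 i + k2 * f2 i + k3 * f3 i + k4 * f4 i) (fun i => k5 * f5 i))
    by (repeat apply summable_plus; auto).
  rewrite (Sum_plus (fun i => k1 * f1 i + k2 * f2 i + k3 * f3 i) (fun i => k4 * f4 i))
    by (repeat apply summable_plus; auto).
  rewrite (Sum_plus (fun i => k1 * f1 i + k2 * f2 i) (fun i => k3 * f3 i))
    by (repeat apply summable_plus; auto).
  rewrite (Sum_plus (fun i => k1 * f1 i) (fun i => k2 * f2 i)) by auto.
  rewrite !Sum_scal; auto.
Qed.

Lemma summable0 : summable (fun _ => 0).
Proof.
  exists 0. intros N. rewrite (W_ext _ (fun i => 0 * 0)) by (intros; rewrite Rabs_R0; ring).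
  rewrite (W_scal 0 (fun _ => 0)). lra.
Qed.

Lemma Sum0 : Sum (fun _ => 0) = 0.
Proof.
  rewrite (Sum_ext _ (fun i => 0 * 0)) by (intros; ring).
  rewrite (Sum_scal 0 (fun _ => 0)) by exact summable0. ring.
Qed.

Lemma sum_shift1 (F : nat -> R) m : sum_f_R0 F (S m) = F 0%nat + sum_f_R0 (fun n => F (S n)) m.
Proof.
  induction m. simpl. ring.
  change (sum_f_R0 F (S (S m))) with (sum_f_R0 F (S m) + F (S (S m))).
  rewrite IHm. simpl. ring.
Qed.

Lemma sum_W f N : sum_f_R0 (fun n => f (Z.of_nat n - Z.of_nat N)%Z) (2 * N) = W f N.
Proof.
  induction N.
  - reflexivity.
  - replace (2 * S N)%nat with (S (S (2 * N))) by lia.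
    rewrite sum_shift1.
    rewrite (sum_eq (fun n => f (Z.of_nat (S n) - Z.of_nat (S N))%Z) (fun n => f (Z.of_nat n - Z.of_nat N)%Z))
      by (intros; f_equal; lia).
    change (sum_f_R0 (fun n => f (Z.of_nat n - Z.of_nat N)%Z) (S (2 * N)))
      with (sum_f_R0 (fun n => f (Z.of_nat n - Z.of_nat N)%Z) (2 * N) + f (Z.of_nat (S (2 * N)) - Z.of_nat N)%Z).
    rewrite IHN, W_S.
    replace (Z.of_nat 0 - Z.of_nat (S N))%Z with (- Z.of_nat (S N))%Z by lia.
    replace (Z.of_nat (S (2 * N)) - Z.of_nat N)%Z with (Z.of_nat (S N)) by lia.
    ring.
Qed.

Lemma decay_shift x z : Rabs (z - x) <= 2 -> 1 / (1 + z ^ 2) <= 9 / (1 + x ^ 2).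
Proof.
  intros H. assert (Hx : 0 < 1 + x ^ 2) by nra. assert (Hz : 0 < 1 + z ^ 2) by nra.
  assert (Hle : 1 + x ^ 2 <= 9 * (1 + z ^ 2)).
  { assert (Ha : (z - x) ^ 2 <= 4).
    { rewrite <- pow2_abs. pose proof (Rabs_pos (z - x)). nra. }
    nra. }
  replace (1 / (1 + z ^ 2)) with (9 * / (9 * (1 + z ^ 2))) by (field; lra).
  unfold Rdiv. apply Rmult_le_compat_l. lra. apply Rinv_le_contravar; lra.
Qed.

Lemma pos3 a b c : 0 <= a -> 0 <= b -> 0 <= c -> 0 <= a * b * c.
Proof. intros; repeat apply Rmult_le_pos; auto. Qed.
Lemma pos4 a b c d : 0 <= a -> 0 <= b -> 0 <= c -> 0 <= d -> 0 <= a * b * c * d.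
Proof. intros; repeat apply Rmult_le_pos; auto. Qed.

Lemma abs5 a b c d e : Rabs (a + b + c + d - e) <= Rabs a + Rabs b + Rabs c + Rabs d + Rabs e.
Proof. unfold Rabs; repeat destruct Rcase_abs; lra. Qed.

Lemma W_decay h N : 0 < h ->
  W (fun i => 1 / (1 + (IZR i * h) ^ 2)) N <= 1 + 4 / h * (1 - 1 / (1 + INR N * h)).
Proof.
  intros Hh. induction N.
  - rewrite W_0. change (INR 0) with 0. replace (1 / (1 + (0 * h) ^ 2)) with 1 by field.
    replace (1 / (1 + 0 * h)) with 1 by field. rewrite Rminus_eq_0, Rmult_0_r; lra.
  - rewrite W_S. rewrite opp_IZR, <- INR_IZR_INZ.
    replace ((- INR (S N) * h) ^ 2) with ((INR (S N) * h) ^ 2) by ring.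
    set (n := INR N). assert (Hn : 0 <= n) by apply pos_INR.
    rewrite S_INR. fold n.  fold n in IHN.
    assert (K : 2 * (1 / (1 + ((n + 1) * h) ^ 2)) <= 4 / h * (1 / (1 + n * h) - 1 / (1 + (n + 1) * h))).
    { replace (4 / h * (1 / (1 + n * h) - 1 / (1 + (n + 1) * h))) with (4 / ((1 + n * h) * (1 + (n + 1) * h)))
        by (field; split; [|split]; nra).
      assert (Ha1 : 0 < 1 + n * h) by nra. assert (Ha2 : 0 < 1 + (n + 1) * h) by nra.
      assert (Ha : 0 < (1 + n * h) * (1 + (n + 1) * h)) by nra.
      assert (Hb : 0 < 1 + ((n + 1) * h) ^ 2) by nra.
      assert (Hab : (1 + n * h) * (1 + (n + 1) * h) <= 2 * (1 + ((n + 1) * h) ^ 2)).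
      { assert (Hy : 0 <= (n + 1) * h) by nra.
        assert (Hy2 : 1 + n * h <= 1 + (n + 1) * h) by nra.
        set (y := (n + 1) * h) in *. assert (0 <= (y - 1) ^ 2) by apply pow2_ge_0.
        apply Rle_trans with ((1 + y) * (1 + y)). apply Rmult_le_compat_r; lra. nra. }
      unfold Rdiv. rewrite Rmult_1_l.
      apply Rmult_le_reg_r with ((1 + n * h) * (1 + (n + 1) * h) * (1 + ((n + 1) * h) ^ 2)).
      nra. replace (2 * / (1 + ((n + 1) * h) ^ 2) * ((1 + n * h) * (1 + (n + 1) * h) * (1 + ((n + 1) * h) ^ 2)))
        with (2 * ((1 + n * h) * (1 + (n + 1) * h))) by (field; repeat split; lra).
      replace (4 * / ((1 + n * h) * (1 + (n + 1) * h)) * ((1 + n * h) * (1 + (n + 1) * h) * (1 + ((n + 1) * h) ^ 2)))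
        with (4 * (1 + ((n + 1) * h) ^ 2)) by (field; repeat split; lra). lra. }
    lra.
Qed.

Lemma W_decay' h N : 0 < h -> W (fun i => 1 / (1 + (IZR i * h) ^ 2)) N <= 1 + 4 / h.
Proof.
  intros Hh. eapply Rle_trans. apply W_decay; auto.
  assert (0 < 1 + INR N * h) by (pose proof (pos_INR N); nra).
  assert (0 <= 1 / (1 + INR N * h)) by (apply Rdiv_le_0_compat; lra).
  assert (0 < 4 / h) by (apply Rdiv_lt_0_compat; lra). nra.
Qed.

Section Main.
Variables (c g d t0 : R) (theta : R -> R -> R) (C : R).
Hypothesis Ht0 : 0 < t0.
Hypothesis Hsmooth : smooth2 theta.
Hypothesis Hpde : forall x t, 0 <= t <= t0 ->
     dt 1 theta x t + c * dx 1 theta x t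
     + g * theta x t * dx 1 theta x t + d * dx 3 theta x t = 0.
Hypothesis Hdecay_t : forall x t, 0 <= t <= t0 ->
     Rabs (dt 2 theta x t) <= C / (1 + x ^ 2).
Hypothesis Hdecay_x : forall (k : nat) x t, (k <= 5)%nat -> 0 <= t <= t0 ->
     Rabs (dx k theta x t) <= C / (1 + x ^ 2).

Lemma C_nonneg : 0 <= C.
Proof.
  assert (H := Hdecay_x 0 0 0 (Nat.le_0_l _) ltac:(lra)).
  pose proof (Rabs_pos (dx 0 theta 0 0)).
  assert (X : 0 <= C / (1 + 0 ^ 2)) by lra.
  replace (C / (1 + 0 ^ 2)) with C in X by field. exact X.
Qed.

Lemma Dnx k : forall x t, Derive_n (fun y => theta y t) k x = dx k theta x t.
Proof.
  induction k as [|k IH]; intros x t. reflexivity.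
  simpl Derive_n. rewrite (Derive_ext _ (fun y => dx k theta y t)) by (intros; apply IH).
  unfold dx. simpl repeat. cbn [pd]. exact eq_refl.
Qed.

Lemma Dnt k : forall x t, Derive_n (fun s => theta x s) k t = dt k theta x t.
Proof.
  induction k as [|k IH]; intros x t. reflexivity.
  simpl Derive_n. rewrite (Derive_ext _ (fun s => dt k theta x s)) by (intros; apply IH).
  unfold dt. simpl repeat. cbn [pd]. exact eq_refl.
Qed.

Lemma sx t : smooth1 (fun y => theta y t).
Proof.
  intros k x. destruct k as [|k]. exact I. change (ex_derive (Derive_n (fun y => theta y t) k) x).
  apply (ex_derive_ext (fun y => dx k theta y t)). intros; symmetry; apply Dnx.
  exact (proj1 (Hsmooth (repeat true k) x t)).
Qed.

Lemma st x : smooth1 (fun s => theta x s).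
Proof.
  intros k t. destruct k as [|k]. exact I. change (ex_derive (Derive_n (fun s => theta x s) k) t).
  apply (ex_derive_ext (fun s => dt k theta x s)). intros; symmetry; apply Dnt.
  exact (proj1 (proj2 (Hsmooth (repeat false k) x t))).
Qed.

Lemma dxb k x z t : (k <= 5)%nat -> 0 <= t <= t0 -> Rabs (z - x) <= 2 ->
  Rabs (dx k theta z t) <= 9 * C / (1 + x ^ 2).
Proof.
  intros Hk Ht Hz. eapply Rle_trans. apply Hdecay_x; auto.
  pose proof (decay_shift x z Hz). pose proof C_nonneg.
  replace (C / (1 + z ^ 2)) with (C * (1 / (1 + z ^ 2))) by (field; nra).
  replace (9 * C / (1 + x ^ 2)) with (C * (9 / (1 + x ^ 2))) by (field; nra).
  apply Rmult_le_compat_l; auto.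
Qed.

Lemma dxC k z t : (k <= 5)%nat -> 0 <= t <= t0 -> Rabs (dx k theta z t) <= C.
Proof.
  intros Hk Ht. eapply Rle_trans. apply Hdecay_x; auto. pose proof C_nonneg.
  assert (1 <= 1 + z ^ 2) by nra.
  replace (C / (1 + z ^ 2)) with (C * / (1 + z ^ 2)) by reflexivity.
  rewrite <- (Rmult_1_r C) at 2. apply Rmult_le_compat_l; auto.
  rewrite <- Rinv_1. apply Rinv_le_contravar; lra.
Qed.

Definition e0 := Rabs d + Rabs c.
Definition Cr := C * (1 + 2 * Rabs c + 2 * Rabs g * C + 9 * e0).

Definition B1 := Rabs g * (1 + 2 * C).
Definition Acst := 5 * (c ^ 2 + 6 * e0 ^ 2 + g ^ 2 + 2 * g ^ 2 * C ^ 2).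

Section Step.
Variables h tau : R.
Hypothesis Hh : 0 < h.
Hypothesis Hh1 : h <= 1.
Hypothesis Htau : 0 < tau.

Definition eps := d - c * h ^ 2 / 6.
Definition u j i := theta_disc c g d theta h tau j i.
Definition v (j : nat) (i : Z) := theta (IZR i * h) (INR j * tau).
Definition e j i := u j i - v j i.
Definition D1 (w : Z -> R) i := (w (i + 1)%Z - w (i - 1)%Z) / (2 * h).
Definition D3 (w : Z -> R) i := (w (i + 2)%Z - 2 * w (i + 1)%Z + 2 * w (i - 1)%Z - w (i - 2)%Z) / (2 * h ^ 3).
Definition r j i := (v (S j) i - v j i) / tau + c * D1 (v j) i + g * v j i * D1 (v j) i + eps * D3 (v j) i.
Definition L j i := c * D1 (e j) i + eps * D3 (e j) i
   + g * (e j i * D1 (e j) i + v j i * D1 (e j) i + e j i * D1 (v j) i).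

Lemma err_rec j i : e (S j) i = e j i - tau * L j i - tau * r j i.
Proof.
  unfold e at 1, u at 1. cbn [theta_disc].
  unfold L, r, D1, D3, e, u, eps. field. lra.
Qed.

Lemma eps_bound : Rabs eps <= e0.
Proof.
  unfold eps, e0. unfold Rminus. eapply Rle_trans. apply Rabs_triang. rewrite Rabs_Ropp.
  assert (Rabs (c * h ^ 2 / 6) <= Rabs c).
  { unfold Rdiv. rewrite !Rabs_mult. rewrite (Rabs_pos_eq (h ^ 2)) by (apply pow_le; lra).
    rewrite (Rabs_pos_eq (/ 6)) by lra. pose proof (Rabs_pos c).
    assert (h ^ 2 <= 1) by nra. nra. }
  lra.
Qed.

Lemma vk j i k : v j (i + k)%Z = theta (IZR i * h + IZR k * h) (INR j * tau).
Proof. unfold v. rewrite plus_IZR. f_equal. ring. Qed.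
Lemma vmk j i k : v j (i - k)%Z = theta (IZR i * h - IZR k * h) (INR j * tau).
Proof. unfold v. rewrite minus_IZR. f_equal. ring. Qed.

Lemma v_bound j i : 0 <= INR j * tau <= t0 -> Rabs (v j i) <= C.
Proof. intros Ht. unfold v. apply (dxC 0); auto; lia. Qed.

Lemma D1v_bound j i : 0 <= INR j * tau <= t0 -> Rabs (D1 (v j) i) <= C.
Proof.
  intros Ht. unfold D1. rewrite vk, vmk. set (x := IZR i * h). simpl IZR. rewrite !Rmult_1_l.
  assert (H := mvt_abs (fun y => theta y (INR j * tau)) (x - h) (x + h) C (sx _) ltac:(lra)).
  replace (x + h - (x - h)) with (2 * h) in H by ring. rewrite (Rabs_pos_eq (2 * h)) in H by lra.
  unfold Rdiv. rewrite Rabs_mult, Rabs_inv, (Rabs_pos_eq (2 * h)) by lra.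
  apply Rle_trans with (2 * h * C * / (2 * h)).
  - apply Rmult_le_compat_r. left; apply Rinv_0_lt_compat; lra. apply H.
    intros z _. rewrite Dnx. apply (dxC 1); auto; lia.
  - right. field. lra.
Qed.

Lemma vdiff_bound j i : 0 <= INR j * tau <= t0 -> Rabs (v j (i - 1)%Z - v j i) <= h * C.
Proof.
  intros Ht. rewrite vmk. unfold v. set (x := IZR i * h). simpl IZR. rewrite !Rmult_1_l.
  assert (H := mvt_abs (fun y => theta y (INR j * tau)) x (x - h) C (sx _) ltac:(lra)).
  replace (x - h - x) with (- h) in H by ring. rewrite Rabs_Ropp, (Rabs_pos_eq h) in H by lra.
  apply H. intros z _. rewrite Dnx. apply (dxC 1); auto; lia.
Qed.

Lemma r_bound j i : 0 <= INR j * tau -> INR (S j) * tau <= t0 ->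
  Rabs (r j i) <= Cr * (tau + h ^ 2) / (1 + (IZR i * h) ^ 2).
Proof.
  intros Ht0' Ht1. set (x := IZR i * h). set (t := INR j * tau).
  assert (Et : INR (S j) * tau = t + tau) by (unfold t; rewrite S_INR; ring).
  assert (Ht : 0 <= t <= t0) by (unfold t in *; lra).
  set (w := C / (1 + x ^ 2)).
  assert (Hx : 0 < 1 + x ^ 2) by nra.
  assert (HC := C_nonneg).
  assert (Hw : 0 <= w) by (unfold w; apply Rdiv_le_0_compat; lra).
  assert (E9 : 9 * C / (1 + x ^ 2) = 9 * w) by (unfold w; field; lra).
  assert (A1 := step_t (fun s => theta x s) t tau w (st x) Htau).
  rewrite !Dnt in A1. specialize (A1 ltac:(intros z Hz; rewrite Dnt; apply Hdecay_t; lra)).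
  assert (A2 := stencil1 (fun y => theta y t) x h (9 * C / (1 + x ^ 2)) (sx t) Hh).
  rewrite !Dnx in A2. specialize (A2 ltac:(intros z Hz; rewrite Dnx; apply dxb; [lia|lra|lra])).
  assert (A3 := stencil3 (fun y => theta y t) x h (9 * C / (1 + x ^ 2)) (sx t) Hh).
  rewrite !Dnx in A3. specialize (A3 ltac:(intros z Hz; rewrite Dnx; apply dxb; [lia|lra|lra])).
  rewrite E9 in A2, A3.
  set (a1 := (theta x (t + tau) - theta x t) / tau - dt 1 theta x t) in A1.
  set (a2 := (theta (x + h) t - theta (x - h) t) / (2 * h) - dx 1 theta x t) in A2.
  set (a3 := (theta (x + 2 * h) t - 2 * theta (x + h) t + 2 * theta (x - h) t - theta (x - 2 * h) t) / (2 * h ^ 3) - dx 3 theta x t) in A3.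
  assert (Er : r j i = a1 + c * a2 + g * theta x t * a2 + eps * a3 - c * h ^ 2 / 6 * dx 3 theta x t
     + (dt 1 theta x t + c * dx 1 theta x t + g * theta x t * dx 1 theta x t + d * dx 3 theta x t)).
  { unfold r, D1, D3. rewrite !vk, !vmk. unfold v. fold x. fold t. rewrite Et.
    rewrite !Rmult_1_l. unfold a1, a2, a3, eps. field. split; lra. }
  rewrite Er, Hpde by auto. rewrite Rplus_0_r.
  assert (Hth : Rabs (theta x t) <= C) by (apply (dxC 0); auto; lia).
  assert (Hd3 : Rabs (dx 3 theta x t) <= w) by (apply Hdecay_x; auto).
  assert (He := eps_bound).
  assert (Tri : Rabs (a1 + c * a2 + g * theta x t * a2 + eps * a3 - c * h ^ 2 / 6 * dx 3 theta x t)
     <= Rabs a1 + Rabs c * Rabs a2 + Rabs g * Rabs (theta x t) * Rabs a2 + Rabs eps * Rabs a3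
        + Rabs c * (h ^ 2 / 6) * Rabs (dx 3 theta x t)).
  { assert (Ec : Rabs (c * h ^ 2 / 6) = Rabs c * (h ^ 2 / 6)).
    { unfold Rdiv. rewrite !Rabs_mult, Rabs_inv, (Rabs_pos_eq (h ^ 2)), (Rabs_pos_eq 6); [ring | lra | apply pow_le; lra]. }
    eapply Rle_trans. apply abs5. rewrite !Rabs_mult, Ec. lra. }
  assert (P1 : Rabs c * Rabs a2 <= Rabs c * (h ^ 2 / 6 * (9 * w))) by (apply Rmult_le_compat_l; [apply Rabs_pos|auto]).
  assert (P2 : Rabs g * Rabs (theta x t) * Rabs a2 <= Rabs g * C * (h ^ 2 / 6 * (9 * w))).
  { apply Rmult_le_compat; auto. apply Rmult_le_pos; apply Rabs_pos. apply Rabs_pos.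
    apply Rmult_le_compat_l; auto. apply Rabs_pos. }
  assert (P3 : Rabs eps * Rabs a3 <= e0 * (h ^ 2 * (9 * w))).
  { apply Rmult_le_compat; auto; apply Rabs_pos. }
  assert (P4 : Rabs c * (h ^ 2 / 6) * Rabs (dx 3 theta x t) <= Rabs c * (h ^ 2 / 6) * w).
  { apply Rmult_le_compat_l; auto. apply Rmult_le_pos. apply Rabs_pos. apply Rdiv_le_0_compat; [apply pow_le|]; lra. }
  replace (Cr * (tau + h ^ 2) / (1 + x ^ 2)) with ((1 + 2 * Rabs c + 2 * Rabs g * C + 9 * e0) * (tau + h ^ 2) * w)
    by (unfold Cr, w; field; lra).
  assert (Hh2 : 0 <= h ^ 2) by (apply pow_le; lra).
  assert (0 <= Rabs c) by apply Rabs_pos. assert (0 <= Rabs g) by apply Rabs_pos.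
  assert (0 <= e0) by (unfold e0; pose proof (Rabs_pos c); pose proof (Rabs_pos d); lra).
  assert (0 <= Rabs c * tau * w) by (apply pos3; lra).
  assert (0 <= Rabs g * C * tau * w) by (apply pos4; lra).
  assert (0 <= e0 * tau * w) by (apply pos3; lra).
  assert (0 <= Rabs c * h ^ 2 * w) by (apply pos3; lra).
  assert (0 <= Rabs g * C * h ^ 2 * w) by (apply pos4; lra).
  assert (0 <= h ^ 2 * w) by (apply pos2; lra).
  assert (0 <= tau * w) by (apply pos2; lra).
  lra.
Qed.


Lemma r_sum j : 0 <= INR j * tau -> INR (S j) * tau <= t0 ->
  summable (fun i => r j i ^ 2) /\ Sum (fun i => r j i ^ 2) <= Cr ^ 2 * (tau + h ^ 2) ^ 2 * (1 + 4 / h).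
Proof.
  intros H1 H2. set (K0 := Cr ^ 2 * (tau + h ^ 2) ^ 2).
  assert (HK0 : 0 <= K0) by (unfold K0; apply pos2; apply pow2_ge_0).
  assert (Hp : forall i, r j i ^ 2 <= K0 * (1 / (1 + (IZR i * h) ^ 2))).
  { intros i. assert (Hr := r_bound j i H1 H2). set (y := 1 + (IZR i * h) ^ 2) in *.
    assert (Hy : 1 <= y) by (unfold y; nra).
    assert (HCr : 0 <= Cr) by (unfold Cr, e0; pose proof C_nonneg; apply pos2; auto;
        pose proof (Rabs_pos c); pose proof (Rabs_pos g); pose proof (Rabs_pos d);
        pose proof (pos2 _ _ (Rabs_pos g) C_nonneg); lra).
    assert (Hk : 0 <= Cr * (tau + h ^ 2)) by (apply pos2; nra).
    assert (Hr2 : r j i ^ 2 <= (Cr * (tau + h ^ 2) / y) ^ 2).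
    { rewrite <- (pow2_abs (r j i)). apply pow_incr. split. apply Rabs_pos. exact Hr. }
    eapply Rle_trans. apply Hr2. unfold K0. 
    replace ((Cr * (tau + h ^ 2) / y) ^ 2) with (Cr ^ 2 * (tau + h ^ 2) ^ 2 * (1 / y) * (1 / y)) by (field; lra).
    fold y. assert (Hq : 0 <= 1 / y <= 1).
    { split. apply Rdiv_le_0_compat; lra. unfold Rdiv. rewrite Rmult_1_l. rewrite <- Rinv_1. apply Rinv_le_contravar; lra. }
    set (q := 1 / y) in *. set (A0 := Cr ^ 2 * (tau + h ^ 2) ^ 2).
    assert (0 <= A0) by (apply pos2; apply pow2_ge_0).
    assert (0 <= A0 * q * (1 - q)) by (apply pos3; lra). nra. }
  assert (Hs : summable (fun i => r j i ^ 2)).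
  { exists (K0 * (1 + 4 / h)). intros N. eapply Rle_trans. apply (W_le _ (fun i => K0 * (1 / (1 + (IZR i * h) ^ 2)))).
    intros i. rewrite Rabs_pos_eq by apply pow2_ge_0. apply Hp.
    rewrite W_scal. apply Rmult_le_compat_l; auto. apply W_decay'; auto. }
  split; auto. apply Sum_ub; auto. intros N.
  eapply Rle_trans. apply (W_le _ (fun i => K0 * (1 / (1 + (IZR i * h) ^ 2)))). apply Hp.
  rewrite W_scal. apply Rmult_le_compat_l; auto. apply W_decay'; auto.
Qed.

Definition Q j i := c * (e j i * e j (i + 1)%Z) / (2 * h)
  + eps * (e j i * e j (i + 2)%Z + e j (i - 1)%Z * e j (i + 1)%Z - 2 * (e j i * e j (i + 1)%Z)) / (2 * h ^ 3)
  + g * v j i * (e j i * e j (i + 1)%Z) / (2 * h).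
Definition Rest j i := g * (v j (i - 1)%Z - v j i) * e j (i - 1)%Z * e j i / (2 * h)
  + g * e j i ^ 2 * D1 (e j) i + g * e j i ^ 2 * D1 (v j) i.

Lemma eL_id j i : e j i * L j i = Q j i - Q j (i - 1)%Z + Rest j i.
Proof.
  unfold Q, Rest, L, D1, D3.
  replace (i - 1 + 1)%Z with i by ring. replace (i - 1 + 2)%Z with (i + 1)%Z by ring.
  replace (i - 1 - 1)%Z with (i - 2)%Z by ring.
  field. lra.
Qed.

Variable Kp : R.
Hypothesis HKp : tau <= Kp * h ^ 6.
Hypothesis Htau1 : tau <= 1.

Definition Lam := 1 + 8 * B1 + 10 * Kp * Acst.
Definition Rb := Cr ^ 2 * (tau + h ^ 2) ^ 2 * (1 + 4 / h).

Lemma abs_of_sq x : x ^ 2 <= h ^ 2 -> Rabs x <= h.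
Proof.
  intros H. apply Rnot_lt_le. intros Hlt. rewrite <- (pow2_abs x) in H.
  assert (h ^ 2 < Rabs x ^ 2) by nra. lra.
Qed.

Lemma Q_summable j : 0 <= INR j * tau <= t0 -> l2 (e j) -> summable (Q j).
Proof.
  intros Ht H.
  assert (P1 := summable_prod _ _ H (summable_shift_l2 _ H)).
  assert (P2 := summable_prod _ _ H (summable_shift2_l2 _ H)).
  assert (P3 := summable_prod _ _ (summable_shiftm_l2 _ H) (summable_shift_l2 _ H)).
  assert (P5 := summable_bmul (v j) _ C (fun i => v_bound j i Ht) P1).
  apply (summable_ext (fun i => c / (2 * h) * (e j i * e j (i + 1)%Z) + eps / (2 * h ^ 3) * (e j i * e j (i + 2)%Z)
     + eps / (2 * h ^ 3) * (e j (i - 1)%Z * e j (i + 1)%Z) + (- 2 * eps / (2 * h ^ 3)) * (e j i * e j (i + 1)%Z)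
     + g / (2 * h) * (v j i * (e j i * e j (i + 1)%Z)))).
  { intros i. unfold Q. field. lra. }
  apply summable_lin5; auto.
Qed.

Lemma energy j : 0 <= INR j * tau -> INR (S j) * tau <= t0 -> l2 (e j) ->
  Sum (fun i => e j i ^ 2) <= h ^ 2 ->
  l2 (e (S j)) /\ Sum (fun i => e (S j) i ^ 2) <= (1 + tau * Lam) * Sum (fun i => e j i ^ 2) + 2 * tau * Rb.
Proof.
  intros Ht0' Ht1 Hl2 HE.
  assert (Ht : 0 <= INR j * tau <= t0) by (rewrite S_INR in Ht1; lra).
  set (E := Sum (fun i => e j i ^ 2)) in *.
  assert (HE0 : 0 <= E) by (eapply Rle_trans; [apply (pow2_ge_0 (e j 0%Z)) | apply (Sum_pt (fun i => e j i ^ 2) 0%Z); auto; intros; apply pow2_ge_0]).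
  assert (Hpt : forall i, Rabs (e j i) <= h).
  { intros i. apply abs_of_sq. eapply Rle_trans; [| apply HE]. apply (Sum_pt (fun i => e j i ^ 2) i); auto. intros; apply pow2_ge_0. }
  set (S5 := fun i => e j (i + 2)%Z ^ 2 + e j (i + 1)%Z ^ 2 + e j i ^ 2 + e j (i - 1)%Z ^ 2 + e j (i - 2)%Z ^ 2).
  set (RHS := fun i => (1 + tau) * e j i ^ 2 + (- 2 * tau * (1 + tau)) * (Q j i - Q j (i - 1)%Z)
     + (2 * tau * (1 + tau) * B1) * (e j (i - 1)%Z ^ 2 + e j i ^ 2)
     + ((1 + tau) * tau ^ 2 * (Acst / h ^ 6)) * S5 i + (2 * tau) * r j i ^ 2).
  assert (Hpw : forall i, e (S j) i ^ 2 <= RHS i).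
  { intros i. rewrite err_rec. eapply Rle_trans.
    - apply (pt_gen tau (e j i) (L j i) (r j i) (Q j i - Q j (i - 1)%Z) (Rest j i)
              (B1 * (e j (i - 1)%Z ^ 2 + e j i ^ 2)) (Acst / h ^ 6 * S5 i)); auto.
      + rewrite eL_id. ring.
      + unfold Rest, B1. apply Rest_gen; auto.
        * apply vdiff_bound; auto.
        * unfold D1. apply X1_le1; auto.
        * apply D1v_bound; auto.
      + unfold L, S5. unfold D1 at 1 2 3, D3.
        apply (Lsq_gen c eps g e0 C h (e j i) (v j i) (e j (i + 1)%Z) (e j (i - 1)%Z) (e j (i + 2)%Z) (e j (i - 2)%Z)
                 (D1 (v j) i)); auto.
        * apply eps_bound.
        * apply v_bound; auto.
        * apply D1v_bound; auto.
    - right. unfold RHS. ring. }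
  assert (HQ := Q_summable j Ht Hl2).
  assert (HQm := summable_shiftm _ HQ).
  assert (Hm1 := summable_shiftm_l2 _ Hl2). assert (Hp1 := summable_shift_l2 _ Hl2).
  assert (Hm2 := summable_shiftm2_l2 _ Hl2). assert (Hp2 := summable_shift2_l2 _ Hl2).
  unfold l2 in Hl2, Hm1, Hp1, Hm2, Hp2.
  assert (Hf2 : summable (fun i => Q j i - Q j (i - 1)%Z)).
  { apply (summable_ext (fun i => Q j i + (-1) * Q j (i - 1)%Z)). intros; ring.
    apply summable_plus; auto. apply summable_scal; auto. }
  assert (Hf3 : summable (fun i => e j (i - 1)%Z ^ 2 + e j i ^ 2)) by (apply summable_plus; auto).
  assert (Hf4 : summable S5) by (unfold S5; repeat apply summable_plus; auto).
  destruct (r_sum j Ht0' Ht1) as [Hr Hrb].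
  assert (HRs : summable RHS) by (unfold RHS; apply summable_lin5; auto).
  assert (He' : l2 (e (S j))).
  { unfold l2. apply (summable_cmp _ RHS HRs). intros i. pose proof (Hpw i); pose proof (pow2_ge_0 (e (S j) i)).
    rewrite (Rabs_pos_eq (e (S j) i ^ 2)), (Rabs_pos_eq (RHS i)); lra. }
  split; auto.
  eapply Rle_trans. apply (Sum_le _ RHS He' HRs Hpw).
  unfold RHS. rewrite Sum_lin5; auto.
  assert (Sf2 : Sum (fun i => Q j i - Q j (i - 1)%Z) = 0).
  { rewrite (Sum_ext _ (fun i => Q j i + (-1) * Q j (i - 1)%Z)) by (intros; ring).
    rewrite (Sum_plus (Q j) (fun i => (-1) * Q j (i - 1)%Z)); [| exact HQ | apply summable_scal; exact HQm].
    rewrite (Sum_scal (-1) (fun i => Q j (i - 1)%Z)) by exact HQm.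
    rewrite (Sum_shiftm (Q j)) by exact HQ. ring. }
  assert (Sf3 : Sum (fun i => e j (i - 1)%Z ^ 2 + e j i ^ 2) = 2 * E).
  { rewrite (Sum_plus (fun i => e j (i - 1)%Z ^ 2) (fun i => e j i ^ 2)) by auto.
    rewrite (Sum_shiftm (fun i => e j i ^ 2)) by auto. unfold E. ring. }
  assert (Sf4 : Sum S5 = 5 * E).
  { unfold S5. rewrite (Sum_ext _ (fun i => 1 * e j (i + 2)%Z ^ 2 + 1 * e j (i + 1)%Z ^ 2 + 1 * e j i ^ 2
        + 1 * e j (i - 1)%Z ^ 2 + 1 * e j (i - 2)%Z ^ 2)) by (intros; ring).
    rewrite (Sum_lin5 1 1 1 1 1 (fun i => e j (i + 2)%Z ^ 2) (fun i => e j (i + 1)%Z ^ 2) (fun i => e j i ^ 2)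
       (fun i => e j (i - 1)%Z ^ 2) (fun i => e j (i - 2)%Z ^ 2)) by auto.
    rewrite (Sum_shift2 (fun i => e j i ^ 2)) by auto.
    rewrite (Sum_shift (fun i => e j i ^ 2)) by auto.
    rewrite (Sum_shiftm (fun i => e j i ^ 2)) by auto.
    rewrite (Sum_shiftm2 (fun i => e j i ^ 2)) by auto. unfold E. ring. }
  rewrite Sf2, Sf3, Sf4. fold E.
  assert (HB1 : 0 <= B1) by (unfold B1; apply pos2; [apply Rabs_pos | pose proof C_nonneg; lra]).
  assert (HA : 0 <= Acst) by (unfold Acst; pose proof (pow2_ge_0 c); pose proof (pow2_ge_0 e0);
     pose proof (pow2_ge_0 g); pose proof (pos2 _ _ (pow2_ge_0 g) (pow2_ge_0 C)); lra).
  assert (Hh6 : 0 < h ^ 6) by (apply pow_lt; lra).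
  assert (HKp0 : 0 <= Kp) by (apply Rnot_lt_le; intros Hk; assert (Kp * h ^ 6 < 0) by nra; lra).
  set (Y := Acst / h ^ 6).
  assert (HY : 0 <= Y) by (unfold Y; apply Rdiv_le_0_compat; lra).
  assert (F : tau * Y <= Kp * Acst).
  { unfold Y. replace (Kp * Acst) with (Kp * h ^ 6 * (Acst / h ^ 6)) by (field; lra).
    apply Rmult_le_compat_r; auto. }
  assert (I1 : 0 <= tau * B1 * E * (1 - tau)) by (apply pos4; lra).
  assert (I2 : 0 <= tau * E * (1 + tau) * (Kp * Acst - tau * Y)) by (apply pos4; lra).
  assert (I3 : 0 <= tau * E * (1 - tau) * (Kp * Acst)) by (apply pos4; try lra; apply pos2; auto).
  assert (I4 : 2 * tau * Sum (fun i => r j i ^ 2) <= 2 * tau * Rb) by (apply Rmult_le_compat_l; [lra| exact Hrb]).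
  unfold Lam. nra.
Qed.


Lemma Kp_nonneg : 0 <= Kp.
Proof.
  assert (Hh6 : 0 < h ^ 6) by (apply pow_lt; lra).
  apply Rnot_lt_le; intros Hk; assert (Kp * h ^ 6 < 0) by nra; lra.
Qed.

Lemma Lam_nonneg : 0 <= Lam.
Proof.
  unfold Lam. assert (HB1 : 0 <= B1) by (unfold B1; apply pos2; [apply Rabs_pos | pose proof C_nonneg; lra]).
  assert (HA : 0 <= Acst) by (unfold Acst; pose proof (pow2_ge_0 c); pose proof (pow2_ge_0 e0);
     pose proof (pow2_ge_0 g); pose proof (pos2 _ _ (pow2_ge_0 g) (pow2_ge_0 C)); lra).
  pose proof (pos2 _ _ Kp_nonneg HA). lra.
Qed.

Lemma Rb_nonneg : 0 <= Rb.
Proof.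
  unfold Rb. apply pos3; try apply pow2_ge_0. assert (0 < 4 / h) by (apply Rdiv_lt_0_compat; lra). lra.
Qed.

Lemma qpow j : (1 + tau * Lam) ^ j <= exp (Lam * (INR j * tau)).
Proof.
  induction j.
  - simpl. rewrite Rmult_0_l, Rmult_0_r, exp_0. lra.
  - rewrite S_INR. replace (Lam * ((INR j + 1) * tau)) with (tau * Lam + Lam * (INR j * tau)) by ring.
    rewrite exp_plus. change ((1 + tau * Lam) ^ S j) with ((1 + tau * Lam) * (1 + tau * Lam) ^ j).
    assert (0 <= tau * Lam) by (apply pos2; [lra | apply Lam_nonneg]).
    apply Rmult_le_compat; try lra. apply pow_le; lra. apply exp_ineq1_le.
Qed.

Lemma e0_zero i : e 0 i = 0.
Proof. unfold e, u, v. cbn [theta_disc INR]. rewrite Rmult_0_l. ring. Qed.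

Lemma main_ind : t0 * 2 * Rb * exp (Lam * t0) <= h ^ 2 ->
  forall j, INR j * tau <= t0 ->
  l2 (e j) /\ Sum (fun i => e j i ^ 2) <= INR j * tau * 2 * Rb * (1 + tau * Lam) ^ j.
Proof.
  intros Hboot. induction j; intros Hj.
  - assert (Ez : forall i, 0 = e 0 i ^ 2) by (intros; rewrite e0_zero; ring).
    split. unfold l2. apply (summable_ext _ _ Ez summable0).
    rewrite <- (Sum_ext _ _ Ez), Sum0. simpl. lra.
  - assert (HjS := Hj). rewrite S_INR in Hj.
    assert (Hj0 : 0 <= INR j * tau) by (apply pos2; [apply pos_INR | lra]).
    destruct (IHj ltac:(lra)) as [Hl2 HS].
    assert (Hq : (1 + tau * Lam) ^ j <= exp (Lam * t0)).
    { eapply Rle_trans. apply qpow. 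
      assert (Lam * (INR j * tau) <= Lam * t0) by (apply Rmult_le_compat_l; [apply Lam_nonneg | lra]).
      destruct (Req_dec (Lam * (INR j * tau)) (Lam * t0)) as [E|E]. rewrite E; lra.
      left. apply exp_increasing. lra. }
    assert (HRb := Rb_nonneg). assert (HL := Lam_nonneg).
    assert (Hqj : 1 <= (1 + tau * Lam) ^ j).
    { assert (0 <= tau * Lam) by (apply pos2; lra).
      pose proof (pow_incr 1 (1 + tau * Lam) j ltac:(lra)) as Hp. rewrite pow1 in Hp. exact Hp. }
    assert (Hb : Sum (fun i => e j i ^ 2) <= h ^ 2).
    { eapply Rle_trans. apply HS. eapply Rle_trans; [| apply Hboot].
      apply Rle_trans with (t0 * 2 * Rb * (1 + tau * Lam) ^ j).
      - apply Rmult_le_compat_r. lra. apply Rmult_le_compat_r. lra. apply Rmult_le_compat_r; lra.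
      - apply Rmult_le_compat_l; auto. apply pos3; lra. }
    destruct (energy j Hj0 HjS Hl2 Hb) as [Hl2' HS'].
    split; auto. eapply Rle_trans. apply HS'.
    rewrite S_INR. change ((1 + tau * Lam) ^ S j) with ((1 + tau * Lam) * (1 + tau * Lam) ^ j).
    set (q := 1 + tau * Lam) in *. set (qj := q ^ j) in *.
    assert (Hq1 : 1 <= q) by (unfold q; assert (0 <= tau * Lam) by (apply pos2; lra); lra).
    assert (X1 : q * Sum (fun i => e j i ^ 2) <= q * (INR j * tau * 2 * Rb * qj)) by (apply Rmult_le_compat_l; lra).
    assert (X2 : 0 <= tau * Rb * (q * qj - 1)) by (apply pos3; nra).
    nra.
Qed.

Lemma main_bound : t0 * 2 * Rb * exp (Lam * t0) <= h ^ 2 ->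
  forall j, INR j * tau <= t0 ->
  l2 (e j) /\ Sum (fun i => e j i ^ 2) <= t0 * 2 * Rb * exp (Lam * t0).
Proof.
  intros Hboot j Hj. destruct (main_ind Hboot j Hj) as [H1 H2]. split; auto.
  eapply Rle_trans. apply H2.
  assert (HRb := Rb_nonneg). assert (HL := Lam_nonneg).
  assert (Hj0 : 0 <= INR j * tau) by (apply pos2; [apply pos_INR | lra]).
  assert (Hq : (1 + tau * Lam) ^ j <= exp (Lam * t0)).
  { eapply Rle_trans. apply qpow.
    assert (Lam * (INR j * tau) <= Lam * t0) by (apply Rmult_le_compat_l; [apply Lam_nonneg | lra]).
    destruct (Req_dec (Lam * (INR j * tau)) (Lam * t0)) as [E|E]. rewrite E; lra.
    left. apply exp_increasing. lra. }
  assert (0 <= (1 + tau * Lam) ^ j) by (apply pow_le; assert (0 <= tau * Lam) by (apply pos2; lra); lra).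
  apply Rmult_le_compat; auto. apply pos3; lra.
  apply Rmult_le_compat_r; lra.
Qed.

End Step.


Lemma final (K : R) : exists M : R, exists h0 : R, 0 < h0 /\
    forall h tau : R, 0 < h -> h < h0 -> 0 < tau -> tau <= K * h ^ 6 ->
    forall j : nat, INR j * tau <= t0 ->
      ex_finite_lim_seq (err_partial c g d theta h tau j) /\
      sqrt (real (Lim_seq (err_partial c g d theta h tau j)))
        <= M * (tau + h ^ 2).
Proof.
  set (L0 := Lam (Rabs K)).
  set (P := t0 * 2 * exp (L0 * t0) * Cr ^ 2).
  assert (HP : 0 <= P) by (unfold P; apply pos4; try lra; [left; apply exp_pos | apply pow2_ge_0]).
  set (M0 := 5 * P).
  exists (sqrt M0), (Rmin 1 (Rmin (1 / (4 * M0 + 1)) (1 / (Rabs K + 1)))).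
  assert (HK : 0 <= Rabs K) by apply Rabs_pos.
  assert (HM0 : 0 <= M0) by (unfold M0; lra).
  split.
  { apply Rmin_pos. lra. apply Rmin_pos; apply Rdiv_lt_0_compat; lra. }
  intros h tau Hh Hh0 Htau HtK j Hj.
  assert (Hh1 : h <= 1) by (pose proof (Rmin_l 1 (Rmin (1 / (4 * M0 + 1)) (1 / (Rabs K + 1)))); lra).
  assert (Hm : h <= Rmin (1 / (4 * M0 + 1)) (1 / (Rabs K + 1)))
    by (pose proof (Rmin_r 1 (Rmin (1 / (4 * M0 + 1)) (1 / (Rabs K + 1)))); lra).
  assert (HM0h : (4 * M0 + 1) * h <= 1).
  { assert (h <= 1 / (4 * M0 + 1)) by (pose proof (Rmin_l (1 / (4 * M0 + 1)) (1 / (Rabs K + 1))); lra).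
    apply Rmult_le_reg_r with (/ (4 * M0 + 1)). apply Rinv_0_lt_compat; lra.
    replace ((4 * M0 + 1) * h * / (4 * M0 + 1)) with h by (field; lra). lra. }
  assert (HKh : (Rabs K + 1) * h <= 1).
  { assert (h <= 1 / (Rabs K + 1)) by (pose proof (Rmin_r (1 / (4 * M0 + 1)) (1 / (Rabs K + 1))); lra).
    apply Rmult_le_reg_r with (/ (Rabs K + 1)). apply Rinv_0_lt_compat; lra.
    replace ((Rabs K + 1) * h * / (Rabs K + 1)) with h by (field; lra). lra. }
  assert (Hh6 : 0 < h ^ 6) by (apply pow_lt; lra).
  assert (HKp : tau <= Rabs K * h ^ 6).
  { eapply Rle_trans. apply HtK. apply Rmult_le_compat_r. lra. apply Rle_abs. }
  assert (Hth2 : tau <= h ^ 2).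
  { eapply Rle_trans. apply HKp. replace (Rabs K * h ^ 6) with ((Rabs K * h) * h ^ 5) by ring.
    assert (h ^ 5 <= h ^ 2).
    { replace (h ^ 5) with (h ^ 2 * h ^ 3) by ring. assert (h ^ 3 <= 1) by (rewrite <- (pow1 3); apply pow_incr; lra).
      assert (0 <= h ^ 2) by apply pow2_ge_0. nra. }
    assert (0 <= h ^ 5) by (apply pow_le; lra).
    assert (Rabs K * h <= 1) by lra.
    assert (Rabs K * h * h ^ 5 <= 1 * h ^ 5) by (apply Rmult_le_compat_r; lra). lra. }
  assert (Hh2 : h ^ 2 <= 1) by nra.
  assert (Htau1 : tau <= 1) by lra.
  assert (HRbh : h * Rb h tau = Cr ^ 2 * (tau + h ^ 2) ^ 2 * (h + 4)) by (unfold Rb; field; lra).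
  assert (Hs0 : 0 <= tau + h ^ 2) by (pose proof (pow2_ge_0 h); lra).
  assert (Hsq : (tau + h ^ 2) ^ 2 <= 4 * h ^ 4).
  { replace (4 * h ^ 4) with ((2 * h ^ 2) ^ 2) by ring. apply pow_incr. lra. }
  assert (Hkey : h * (t0 * 2 * Rb h tau * exp (L0 * t0)) <= M0 * (tau + h ^ 2) ^ 2).
  { replace (h * (t0 * 2 * Rb h tau * exp (L0 * t0))) with (P * (tau + h ^ 2) ^ 2 * (h + 4))
      by (unfold P, Rb; field; lra).
    unfold M0. assert (0 <= P * (tau + h ^ 2) ^ 2) by (apply pos2; auto; apply pow2_ge_0).
    nra. }
  assert (Hboot : t0 * 2 * Rb h tau * exp (Lam (Rabs K) * t0) <= h ^ 2).
  { fold L0. apply Rmult_le_reg_l with h. auto. eapply Rle_trans. apply Hkey.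

    assert (M0 * (tau + h ^ 2) ^ 2 <= M0 * (4 * h ^ 4)) by (apply Rmult_le_compat_l; auto).
    assert (4 * M0 * h <= 1) by lra.
    assert (M0 * (4 * h ^ 4) = (4 * M0 * h) * (h * h ^ 2)) by ring.
    assert (0 <= h * h ^ 2) by (apply pos2; [lra | apply pow2_ge_0]).
    assert ((4 * M0 * h) * (h * h ^ 2) <= 1 * (h * h ^ 2)) by (apply Rmult_le_compat_r; lra). lra. }
  destruct (main_bound h tau Hh Hh1 Htau (Rabs K) HKp Htau1 Hboot j Hj) as [Hl2 HS].
  fold L0 in HS.
  set (f := fun i => e h tau j i ^ 2).
  assert (Eerr : forall N, err_partial c g d theta h tau j N = h * W f N).
  { intros N. transitivity (W (fun i => f i * h) N).
    - exact (sum_W (fun i => f i * h) N).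
    - rewrite <- W_scal. apply W_ext. intros; ring. }
  assert (Hlim : is_lim_seq (err_partial c g d theta h tau j) (h * Sum f)).
  { apply (is_lim_seq_ext (fun N => h * W f N)). intros; rewrite Eerr; auto.
    exact (is_lim_seq_scal_l _ h _ (Sum_spec f Hl2)). }
  split. exists (h * Sum f). exact Hlim.
  rewrite (is_lim_seq_unique _ _ Hlim). simpl real.
  assert (HfS : h * Sum f <= M0 * (tau + h ^ 2) ^ 2).
  { eapply Rle_trans; [| apply Hkey]. apply Rmult_le_compat_l. lra. exact HS. }
  eapply Rle_trans. apply sqrt_le_1_alt. apply HfS.
  rewrite sqrt_mult_alt by (unfold M0; lra). rewrite sqrt_pow2 by auto. lra.
Qed.

End Main.

Theorem mainTheorem4
  (c g d t0 : R) (theta : R -> R -> R) (C : R)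
  (Ht0 : 0 < t0)
  (Hsmooth : smooth2 theta)
  (Hpde : forall x t, 0 <= t <= t0 ->
     dt 1 theta x t + c * dx 1 theta x t
     + g * theta x t * dx 1 theta x t + d * dx 3 theta x t = 0)
  (Hdecay_t : forall x t, 0 <= t <= t0 ->
     Rabs (dt 2 theta x t) <= C / (1 + x ^ 2))
  (Hdecay_x : forall (k : nat) x t, (k <= 5)%nat -> 0 <= t <= t0 ->
     Rabs (dx k theta x t) <= C / (1 + x ^ 2))
  (K : R) :
  exists M : R, exists h0 : R, 0 < h0 /\
    forall h tau : R, 0 < h -> h < h0 -> 0 < tau -> tau <= K * h ^ 6 ->
    forall j : nat, INR j * tau <= t0 ->
      ex_finite_lim_seq (err_partial c g d theta h tau j) /\
      sqrt (real (Lim_seq (err_partial c g d theta h tau j)))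
        <= M * (tau + h ^ 2).
Proof.
  eapply final; eauto.
Qed.
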